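(* Let $n,t$ be positive integers with $t\le n$, and let $a_1,\dots,a_m$ be positive integers, each at most $n/2$, with $a_1+\dots+a_m=t$. Then: (a) some subset of $\{a_1,\dots,a_m\}$ (as a multiset of terms) has sum between $t/3$ and $n/2$ inclusive; (b) if $t\ge n/4$, some subset of $\{a_1,\dots,a_m\}$ has sum between $n/4$ and $n/2$ inclusive. *)

(* Defs.v *)
From mathcomp Require Import all_boot.

(* Main.v *)
Require Import Defs.
From mathcomp Require Import all_boot.
From mathcomp Require Import zify.

Lemma cross (g : nat -> nat) (N m : nat) :
  g 0 <= N -> N < g m -> exists2 k, k < m & g k <= N < g k.+1.
Proof.
elim: m => [|m IH] h0 hm; first by rewrite ltnNge h0 in hm.
case: (leqP (g m) N) => H.
  by exists m => //; rewrite H hm.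
by have [k km Hk] := IH h0 H; exists k => //; apply: ltnW.
Qed.

Lemma setsum (m : nat) (a : 'I_m -> nat) (P : pred 'I_m) :
  \sum_(i in [set i | P i]) a i = \sum_(i | P i) a i.
Proof. by apply: eq_bigl => i; rewrite inE. Qed.

Theorem mainTheorem13 (n t m : nat) (a : 'I_m -> nat) :
  0 < n -> 0 < t -> t <= n ->
  (forall i, 0 < a i) ->
  (forall i, 2 * a i <= n) ->
  \sum_(i < m) a i = t ->
  (exists I : {set 'I_m},
      t <= 3 * (\sum_(i in I) a i) /\ 2 * (\sum_(i in I) a i) <= n) /\
  (n <= 4 * t ->
    exists I : {set 'I_m},
      n <= 4 * (\sum_(i in I) a i) /\ 2 * (\sum_(i in I) a i) <= n).
Proof.
move=> n0 t0 tn apos an St.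
have [small|big] := leqP (2 * t) n.
  have HT : \sum_(i in [set: 'I_m]) a i = t by rewrite (eq_bigl (fun i => true)) ?St // => i; rewrite inE.
  by split; [|move=> ?]; exists [set: 'I_m]; rewrite HT; lia.
pose f k := \sum_(i < m | i < k) a i.
have f0 : 2 * f 0 <= n by rewrite /f big_pred0.
have fm : n < 2 * f m.
  by rewrite /f (eq_bigl (fun i => true)) ?St // => i; rewrite ltn_ord.
have [k km /andP [Hk1 Hk2]] := @cross (fun k => 2 * f k) n m f0 fm.
pose i0 := Ordinal km.
have E1 : f k.+1 = a i0 + f k.
  rewrite /f (bigD1 i0) //=; congr (_ + _); apply: eq_bigl => i.
  rewrite -val_eqE /=; lia.
have E2 : t = f k.+1 + \sum_(i < m | ~~ (i < k.+1)) a i.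
  by rewrite -St (bigID (fun i : 'I_m => i < k.+1)).
set z := \sum_(i < m | ~~ (i < k.+1)) a i in E2.
have Hy := an i0.
have HA : \sum_(i in [set i : 'I_m | i < k]) a i = f k by rewrite setsum.
have HB : \sum_(i in [set i0]) a i = a i0 by rewrite big_set1.
have HC : \sum_(i in [set i : 'I_m | ~~ (i < k.+1)]) a i = z by rewrite setsum.
split; [|move=> _].
- have : [\/ t <= 3 * f k, t <= 3 * a i0 | t <= 3 * z] by
    case: (leqP t (3 * f k)) => ?; [apply: Or31|
    case: (leqP t (3 * a i0)) => ?; [apply: Or32| apply: Or33]]; lia.
  case=> H.
  + by exists [set i : 'I_m | i < k]; rewrite HA; lia.
  + by exists [set i0]; rewrite HB; lia.
  + by exists [set i : 'I_m | ~~ (i < k.+1)]; rewrite HC; lia.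
- case: (leqP n (4 * f k)) => H.
  + by exists [set i : 'I_m | i < k]; rewrite HA; lia.
  + by exists [set i0]; rewrite HB; lia.
Qed.
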